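(* Consider an implication of canonical form $(\ast)$ and an environment $\eta$, and let $n\ge\max\{2,M_1,\dots,M_M\}$. If the implication is $n$-ary $\eta$-valid, then the Parametricity Condition holds for it and $\eta$.
   Context: $\mathsf{Heap}$: finite partial functions $\mathsf{PosInt}\to\mathsf{Int}$; $g\sqsubseteq h$ means $h$ extends $g$; $h\cdot g$ union of disjoint heaps; componentwise on $\mathsf{Heap}^n$. $\mathsf{IRel}_n$: upward closed subsets of $\mathsf{Heap}^n$; $p*q=\{\mathbf f\cdot\mathbf g\mid\mathbf f\in p,\mathbf g\in q,\text{componentwise disjoint}\}$; $\Delta_n(X)=\{(h_1,\dots,h_n)\mid\exists f\in X.\ \forall k.\ f\sqsubseteq h_k\}$. Assertions: built from primitive assertions $P$, assertion variables, $\mathsf{true},\mathsf{false},\wedge,\vee,*$, quantifiers over integer variables. $n$-ary meaning under $\eta$ and $\rho:\mathsf{AVar}\to\mathsf{IRel}_n$: $[\![P]\!]^n=\Delta_n([\![P]\!]^{\mathrm{prim}}_\eta)$, $[\![a]\!]^n=\rho(a)$, connectives by $\mathsf{Heap}^n,\emptyset,\cap,\cup,*$, quantifiers by unions/intersections. $n$-ary $\eta$-validity of $\varphi\Rightarrow\psi$: $[\![\varphi]\!]^n_{\eta,\rho}\subseteq[\![\psi]\!]^n_{\eta,\rho}$ for all $\rho:\mathsf{AVar}\to\mathsf{IRel}_n$. Canonical form $(\ast)$: $\bigwedge_{i=1}^M\varphi_i*a_{i,1}*\cdots*a_{i,M_i}\Rightarrow\bigvee_{j=1}^N\psi_j*b_{j,1}*\cdots*b_{j,N_j}$,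 $M\ge1$, $N\ge0$, $\varphi_i,\psi_j$ free of assertion variables, every $b_{j,k}$ among the $a_{i,k}$. $V=\{a_{i,k}\}$; $\Pi(i)(c)=|\{k\mid a_{i,k}=c\}|$, $\Omega(j)(c)=|\{k\mid b_{j,k}=c\}|$; $\Pi(i)\ge\Omega(j)$ iff $\Pi(i)(c)\ge\Omega(j)(c)$ for all $c\in V$. Disjunct $j$ is empty if $N_j=0$. Parametricity Condition: for all $h,h_1,\dots,h_M\in\mathsf{Heap}$ with $h_i\sqsubseteq h$ and $h_i\in[\![\varphi_i]\!]^1_\eta$ for all $i$, either (1) there are $i,j$ with $h_i\in[\![\psi_j]\!]^1_\eta$ and $\Pi(i)\ge\Omega(j)$, or (2) there is an empty disjunct $j$ with $h\in[\![\psi_j]\!]^1_\eta$. *)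

(* Defs.v *)
From Stdlib Require Import ZArith List PeanoNat.
Import ListNotations.
Set Implicit Arguments.

Definition Heap : Type :=
  { f : positive -> option Z | exists N : positive, forall p, (N < p)%positive -> f p = None }.

Definition hval (h : Heap) : positive -> option Z := proj1_sig h.

Definition hext (g h : Heap) : Prop :=
  forall p v, hval g p = Some v -> hval h p = Some v.

Definition heap_union (f g h : Heap) : Prop :=
  (forall p, hval f p = None \/ hval g p = None) /\
  (forall p, hval h p = match hval f p with Some v => Some v | None => hval g p end).

Definition Tup (n : nat) : Type := {k : nat | k < n} -> Heap.

Definition upclosed (n : nat) (p : Tup n -> Prop) : Prop :=
  forall hs gs : Tup n, p hs -> (forall k, hext (hs k) (gs k)) -> p gs.

Definition Delta (n : nat) (X : Heap -> Prop) : Tup n -> Prop :=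
  fun hs => exists f, X f /\ forall k, hext f (hs k).

(** Assertions; integer variables and assertion variables are nats. *)
Inductive assn (Prim : Type) : Type :=
| APrim : Prim -> assn Prim
| AVar : nat -> assn Prim
| ATrue : assn Prim
| AFalse : assn Prim
| AAnd : assn Prim -> assn Prim -> assn Prim
| AOr : assn Prim -> assn Prim -> assn Prim
| AStar : assn Prim -> assn Prim -> assn Prim
| AEx : nat -> assn Prim -> assn Prim
| AAll : nat -> assn Prim -> assn Prim.

Arguments ATrue {Prim}.
Arguments AFalse {Prim}.

Definition upd (eta : nat -> Z) (x : nat) (v : Z) : nat -> Z :=
  fun y => if Nat.eqb y x then v else eta y.

Fixpoint varfree (Prim : Type) (phi : assn Prim) : Prop :=
  match phi with
  | APrim _ | ATrue | AFalse => True
  | AVar _ _ => False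
  | AAnd a b | AOr a b | AStar a b => varfree a /\ varfree b
  | AEx _ a | AAll _ a => varfree a
  end.

(** n-ary meaning [[phi]]^n_{eta,rho}; primSem gives [[P]]^prim_eta. *)
Fixpoint sem (Prim : Type) (primSem : Prim -> (nat -> Z) -> Heap -> Prop) (n : nat)
    (eta : nat -> Z) (rho : nat -> Tup n -> Prop) (phi : assn Prim) : Tup n -> Prop :=
  match phi with
  | APrim P => @Delta n (primSem P eta)
  | AVar _ a => rho a
  | ATrue => fun _ => True
  | AFalse => fun _ => False
  | AAnd a b => fun hs => @sem Prim primSem n eta rho a hs /\ @sem Prim primSem n eta rho b hs
  | AOr a b => fun hs => @sem Prim primSem n eta rho a hs \/ @sem Prim primSem n eta rho b hs
  | AStar a b => fun hs => exists fs gs : Tup n,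
      @sem Prim primSem n eta rho a fs /\ @sem Prim primSem n eta rho b gs /\
      forall k, heap_union (fs k) (gs k) (hs k)
  | AEx x a => fun hs => exists v : Z, @sem Prim primSem n (upd eta x v) rho a hs
  | AAll x a => fun hs => forall v : Z, @sem Prim primSem n (upd eta x v) rho a hs
  end.

Definition valid_n (Prim : Type) (primSem : Prim -> (nat -> Z) -> Heap -> Prop) (n : nat)
    (eta : nat -> Z) (phi psi : assn Prim) : Prop :=
  forall rho : nat -> Tup n -> Prop, (forall a, @upclosed n (rho a)) ->
    forall hs, @sem Prim primSem n eta rho phi hs -> @sem Prim primSem n eta rho psi hs.

(** unary meaning [[phi]]^1_eta of a variable-free assertion (rho irrelevant, taken empty) *)
Definition sem1 (Prim : Type) (primSem : Prim -> (nat -> Z) -> Heap -> Prop)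
    (eta : nat -> Z) (phi : assn Prim) (h : Heap) : Prop :=
  @sem Prim primSem 1 eta (fun _ _ => False) phi (fun _ => h).

Definition star_vars (Prim : Type) (phi : assn Prim) (as_ : list nat) : assn Prim :=
  fold_left (fun acc a => AStar acc (AVar Prim a)) as_ phi.

Fixpoint big_and (Prim : Type) (l : list (assn Prim)) : assn Prim :=
  match l with
  | [] => ATrue
  | [x] => x
  | x :: xs => AAnd x (big_and xs)
  end.

Fixpoint big_or (Prim : Type) (l : list (assn Prim)) : assn Prim :=
  match l with
  | [] => AFalse
  | [x] => x
  | x :: xs => AOr x (big_or xs)
  end.

(** The implication of canonical form built from
    lhs = [(phi_1, [a_11..a_1M1]); ...; (phi_M, ...)] and
    rhs = [(psi_1, [b_11..b_1N1]); ...; (psi_N, ...)]. *)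
Definition can_lhs (Prim : Type) (lhs : list (assn Prim * list nat)) : assn Prim :=
  big_and (map (fun p => star_vars (fst p) (snd p)) lhs).
Definition can_rhs (Prim : Type) (rhs : list (assn Prim * list nat)) : assn Prim :=
  big_or (map (fun p => star_vars (fst p) (snd p)) rhs).

Definition canonical_form (Prim : Type) (lhs rhs : list (assn Prim * list nat)) : Prop :=
  1 <= length lhs /\
  (forall p, In p lhs -> varfree (fst p)) /\
  (forall p, In p rhs -> varfree (fst p)) /\
  (forall p b, In p rhs -> In b (snd p) -> exists q, In q lhs /\ In b (snd q)).

Definition Vset (Prim : Type) (lhs : list (assn Prim * list nat)) : list nat :=
  concat (map snd lhs).

(** Pi(i) >= Omega(j), with multiplicities counted by count_occ *)
Definition mult_ge (V ai bj : list nat) : Prop :=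
  forall c, In c V -> count_occ Nat.eq_dec bj c <= count_occ Nat.eq_dec ai c.

Definition parametricity (Prim : Type) (primSem : Prim -> (nat -> Z) -> Heap -> Prop)
    (eta : nat -> Z) (lhs rhs : list (assn Prim * list nat)) : Prop :=
  let d := (@ATrue Prim, @nil nat) in
  forall (h : Heap) (hi : nat -> Heap),
    (forall i, i < length lhs ->
        hext (hi i) h /\ sem1 primSem eta (fst (nth i lhs d)) (hi i)) ->
    (exists i j, i < length lhs /\ j < length rhs /\
        sem1 primSem eta (fst (nth j rhs d)) (hi i) /\
        mult_ge (Vset lhs) (snd (nth i lhs d)) (snd (nth j rhs d)))
    \/
    (exists j, j < length rhs /\ snd (nth j rhs d) = [] /\
        sem1 primSem eta (fst (nth j rhs d)) h).

(* Main.v *)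
Require Import Defs.
From Stdlib Require Import ZArith List PeanoNat Lia.
From Stdlib Require Import Classical ClassicalEpsilon ProofIrrelevance FunctionalExtensionality.
Import ListNotations.

Definition dec (P : Prop) : {P} + {~P} := excluded_middle_informative P.

Definition restr (g : Heap) (P : positive -> Prop) : Heap.
Proof.
  refine (exist _ (fun p => if dec (P p) then hval g p else None) _).
  destruct (proj2_sig g) as [N HN]. exists N. intros p Hp.
  destruct (dec (P p)); [apply HN; exact Hp | reflexivity].
Defined.

Lemma restr_val g P p : hval (restr g P) p = if dec (P p) then hval g p else None.
Proof. reflexivity. Qed.
Lemma restr_in g P p : P p -> hval (restr g P) p = hval g p.
Proof. intro H. rewrite restr_val. destruct (dec (P p)); tauto. Qed.
Lemma restr_out g P p : ~ P p -> hval (restr g P) p = None.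
Proof. intro H. rewrite restr_val. destruct (dec (P p)); tauto. Qed.

Lemma heap_ext (g g' : Heap) : (forall p, hval g p = hval g' p) -> g = g'.
Proof.
  destruct g as [x Hx], g' as [y Hy]; unfold hval; simpl; intro H.
  assert (x = y) by (apply functional_extensionality; auto). subst.
  f_equal; apply proof_irrelevance.
Qed.

Lemma restr_union g P Q R :
  (forall p, hval g p <> None -> ~(P p /\ Q p) /\ (R p <-> P p \/ Q p)) ->
  heap_union (restr g P) (restr g Q) (restr g R).
Proof.
  intro H; split; intro p; rewrite !restr_val;
  destruct (hval g p) eqn:E.
  - destruct (H p ltac:(congruence)) as [H1 H2].
    destruct (dec (P p)), (dec (Q p)); tauto.
  - destruct (dec (P p)), (dec (Q p)); auto.
  - destruct (H p ltac:(congruence)) as [H1 H2].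
    destruct (dec (P p)), (dec (Q p)), (dec (R p)); tauto.
  - destruct (dec (P p)), (dec (Q p)), (dec (R p)); auto.
Qed.

Lemma restr_split f P : heap_union (restr f P) (restr f (fun p => ~ P p)) f.
Proof.
  split; intro p; rewrite !restr_val; destruct (dec (P p)), (dec (~ P p));
    try tauto; destruct (hval f p); auto.
Qed.

Lemma tup1_idx (k k' : {k : nat | k < 1}) : k = k'.
Proof.
  destruct k as [x Hx], k' as [y Hy].
  assert (x = 0) by lia; assert (y = 0) by lia; subst. f_equal; apply proof_irrelevance.
Qed.

Lemma sem_up (Prim : Type) (primSem : Prim -> (nat -> Z) -> Heap -> Prop) (n : nat) :
  forall (phi : assn Prim) eta (rho1 : nat -> Tup 1 -> Prop) (rho : nat -> Tup n -> Prop)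
    (T : Tup 1) (F : Tup n), varfree phi -> @sem Prim primSem 1 eta rho1 phi T ->
    (forall k k', hext (T k) (F k')) -> @sem Prim primSem n eta rho phi F.
Proof.
  pose (z0 := exist (fun k => k < 1) 0 Nat.lt_0_1).
  induction phi; intros eta rho1 rho T F Hvf Hs Hext; simpl in *.
  - destruct Hs as [f [Xf Hf]]. exists f; split; auto.
    intros k x v H. apply (Hext z0 k). apply Hf. exact H.
  - contradiction.
  - auto.
  - auto.
  - destruct Hvf, Hs; split; eauto.
  - destruct Hvf; destruct Hs; [left|right]; eauto.
  - destruct Hvf as [V1 V2]. destruct Hs as [fs [gs [Ha [Hb Hu]]]].
    exists (fun _ => fs z0), (fun k => restr (F k) (fun p => hval (fs z0) p = None)).
    split; [|split].
    + eapply IHphi1; eauto. intros k k'. rewrite (tup1_idx k z0). intros p v H; exact H.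
    + eapply IHphi2; eauto. intros k k' p v H.
      destruct (Hu k) as [Hd Hv].
      rewrite restr_in.
      * apply (Hext k k'). rewrite Hv. destruct (hval (fs k) p) eqn:E; auto.
        destruct (Hd p); congruence.
      * rewrite <- (tup1_idx k z0). destruct (Hd p); congruence.
    + intro k. split; intro p.
      * rewrite restr_val. destruct (dec _); auto.
      * rewrite restr_val. destruct (hval (fs z0) p) eqn:E.
        -- apply (Hext z0 k). destruct (Hu z0) as [_ Hv]. rewrite Hv, E. reflexivity.
        -- destruct (dec _); congruence.
  - destruct Hs as [v Hv]. exists v. eauto.
  - intro v. eauto.
Qed.

Lemma sem_down (Prim : Type) (primSem : Prim -> (nat -> Z) -> Heap -> Prop) (n : nat)
  (k0 : {k : nat | k < n}) :
  forall (phi : assn Prim) eta (rho : nat -> Tup n -> Prop) (G : Tup n) (f : Heap),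
    varfree phi -> @sem Prim primSem n eta rho phi G ->
    (forall p v, (forall k, hval (G k) p = Some v) -> hval f p = Some v) ->
    sem1 primSem eta phi f.
Proof.
  unfold sem1.
  induction phi; intros eta rho G f Hvf Hs Hf; simpl in *.
  - destruct Hs as [g [Xg Hg]]. exists g; split; auto.
    intros k x v H. apply Hf. intro k'. apply Hg. exact H.
  - contradiction.
  - auto.
  - auto.
  - destruct Hvf, Hs; split; eauto.
  - destruct Hvf; destruct Hs; [left|right]; eauto.
  - destruct Hvf as [V1 V2]. destruct Hs as [A [B [HA [HB HU]]]].
    set (P := fun p => exists v, forall k, hval (A k) p = Some v).
    exists (fun _ => restr f P), (fun _ => restr f (fun p => ~ P p)).
    split; [|split].
    + eapply IHphi1; eauto. intros p v H. rewrite restr_in by (exists v; exact H).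
      apply Hf. intro k. destruct (HU k) as [_ Hg]. rewrite Hg, H. reflexivity.
    + eapply IHphi2; eauto. intros p v H.
      assert (HAn : forall k, hval (A k) p = None).
      { intro k. destruct (HU k) as [Hd _]. destruct (Hd p); auto. rewrite H in *; discriminate. }
      rewrite restr_in.
      * apply Hf. intro k. destruct (HU k) as [_ Hg]. rewrite Hg, HAn. auto.
      * intros [v' Hv']. specialize (Hv' k0). rewrite HAn in Hv'. discriminate.
    + intro. apply restr_split.
  - destruct Hs as [v Hv]. exists v. eauto.
  - intro v. eauto.
Qed.

Lemma star_vars_app (Prim : Type) (phi : assn Prim) l a :
  star_vars phi (l ++ [a]) = AStar (star_vars phi l) (AVar Prim a).
Proof. unfold star_vars. rewrite fold_left_app. reflexivity. Qed.

Lemma star_intro (Prim : Type) (primSem : Prim -> (nat -> Z) -> Heap -> Prop) (n : nat)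
  eta (rho : nat -> Tup n -> Prop) (Hb : Heap) (phi : assn Prim)
  (PF : {k : nat | k < n} -> positive -> Prop)
  (PT : nat -> {k : nat | k < n} -> positive -> Prop) :
  forall l (R : {k : nat | k < n} -> positive -> Prop),
  (forall idx, idx < length l -> rho (nth idx l 0) (fun k => restr Hb (PT idx k))) ->
  @sem Prim primSem n eta rho phi (fun k => restr Hb (PF k)) ->
  (forall idx k p, idx < length l -> hval Hb p <> None -> ~ (PF k p /\ PT idx k p)) ->
  (forall idx idx' k p, idx < length l -> idx' < length l -> hval Hb p <> None ->
      PT idx k p -> PT idx' k p -> idx = idx') ->
  (forall k p, hval Hb p <> None -> (R k p <-> PF k p \/ exists idx, idx < length l /\ PT idx k p)) ->
  @sem Prim primSem n eta rho (star_vars phi l) (fun k => restr Hb (R k)).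
Proof.
  intro l; induction l as [|a l IH] using rev_ind; intros R Hrho HF Hd1 Hd2 HR.
  - simpl. replace (fun k => restr Hb (R k)) with (fun k => restr Hb (PF k)); auto.
    apply functional_extensionality; intro k. apply heap_ext; intro p.
    rewrite !restr_val. destruct (hval Hb p) eqn:E.
    + assert (Hp : hval Hb p <> None) by congruence.
      destruct (HR k p Hp) as [H1 H2].
      destruct (dec (PF k p)), (dec (R k p)); auto.
      * exfalso; apply n0; apply H2; auto.
      * exfalso; apply n0. destruct (H1 r) as [|[idx [Hi _]]]; auto. simpl in Hi; lia.
    + destruct (dec _), (dec _); auto.
  - rewrite star_vars_app. simpl.
    rewrite length_app in *. simpl in *.
    exists (fun k => restr Hb (fun p => PF k p \/ exists idx, idx < length l /\ PT idx k p)),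
           (fun k => restr Hb (PT (length l) k)).
    split; [|split].
    + apply IH; auto.
      * intros idx Hi. rewrite <- (app_nth1 l [a]) by auto. apply Hrho. lia.
      * intros; apply Hd1; auto; lia.
      * intros; eapply Hd2; eauto; lia.
      * intros; tauto.
    + pose proof (Hrho (length l) ltac:(lia)) as H. rewrite nth_middle in H. exact H.
    + intro k. apply restr_union. intros p Hp. split.
      * intros [[H1|[idx [Hi H1]]] H2].
        -- eapply Hd1; [| exact Hp | split; eauto]. lia.
        -- assert (idx = length l) by (eapply Hd2; eauto; lia). lia.
      * rewrite HR by auto. split.
        -- intros [H|[idx [Hi H]]]; auto.
           destruct (Nat.eq_dec idx (length l)); [subst; auto|].
           left; right; exists idx; split; auto; lia.
        -- intros [[H|[idx [Hi H]]]|H]; auto.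
           ++ right; exists idx; split; auto; lia.
           ++ right; exists (length l); split; auto; lia.
Qed.

Lemma star_elim (Prim : Type) (primSem : Prim -> (nat -> Z) -> Heap -> Prop) (n : nat)
  eta (rho : nat -> Tup n -> Prop) (phi : assn Prim) :
  forall l (hs : Tup n), @sem Prim primSem n eta rho (star_vars phi l) hs ->
  exists (G : Tup n) (Bs : nat -> Tup n),
    @sem Prim primSem n eta rho phi G /\ (forall k, hext (G k) (hs k)) /\
    (forall idx, idx < length l -> rho (nth idx l 0) (Bs idx) /\
        (forall k, hext (Bs idx k) (hs k)) /\
        (forall k p, hval (G k) p = None \/ hval (Bs idx k) p = None)) /\
    (forall idx idx', idx < length l -> idx' < length l -> idx <> idx' ->
        forall k p, hval (Bs idx k) p = None \/ hval (Bs idx' k) p = None).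
Proof.
  intro l; induction l as [|a l IH] using rev_ind; intros hs H.
  - exists hs, (fun _ => hs). simpl. split; auto. split; [intros k p v Hv; auto|].
    split; intros; lia.
  - rewrite star_vars_app in H. simpl in H. destruct H as [fs [gs [H1 [H2 Hu]]]].
    destruct (IH fs H1) as [G [Bs [HG [HGe [HBs HBd]]]]].
    assert (Efs : forall k, hext (fs k) (hs k)).
    { intros k p v Hv. destruct (Hu k) as [_ E]. rewrite E, Hv. auto. }
    assert (Egs : forall k, hext (gs k) (hs k)).
    { intros k p v Hv. destruct (Hu k) as [D E]. rewrite E.
      destruct (D p) as [D'|D']; [rewrite D'; auto| congruence]. }
    assert (Dfg : forall k p v, hval (fs k) p = Some v -> hval (gs k) p = None).
    { intros k p v Hv. destruct (Hu k) as [D _]. destruct (D p); congruence. }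
    exists G, (fun idx => if Nat.eqb idx (length l) then gs else Bs idx).
    rewrite length_app; simpl.
    split; auto. split; [intros k p v Hv; apply Efs, HGe, Hv|].
    split.
    + intros idx Hi. destruct (Nat.eqb_spec idx (length l)).
      * subst. rewrite nth_middle. split; auto. split; auto.
        intros k p. destruct (hval (G k) p) eqn:E; auto. right. eapply Dfg. apply HGe. exact E.
      * destruct (HBs idx ltac:(lia)) as [Hr [He Hd]].
        rewrite app_nth1 by lia. split; auto. split; auto.
        intros k p v Hv. apply Efs, He, Hv.
    + intros idx idx' Hi Hi' Hne k p.
      destruct (Nat.eqb_spec idx (length l)), (Nat.eqb_spec idx' (length l)).
      * lia.
      * destruct (hval (Bs idx' k) p) eqn:E; auto. left.
        destruct (HBs idx' ltac:(lia)) as [_ [He _]]. eapply Dfg. apply He. exact E.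
      * destruct (hval (Bs idx k) p) eqn:E; auto. right.
        destruct (HBs idx ltac:(lia)) as [_ [He _]]. eapply Dfg. apply He. exact E.
      * apply HBd; auto; lia.
Qed.

Lemma big_and_intro (Prim : Type) (primSem : Prim -> (nat -> Z) -> Heap -> Prop) (n : nat)
  eta (rho : nat -> Tup n -> Prop) :
  forall (l : list (assn Prim)) hs, (forall x, In x l -> @sem Prim primSem n eta rho x hs) ->
    @sem Prim primSem n eta rho (big_and l) hs.
Proof.
  intro l; induction l as [|a l IH]; intros hs H; simpl; auto.
  destruct l as [|b l].
  - apply H; left; auto.
  - split; [apply H; left; auto|]. apply IH. intros x Hx; apply H; right; auto.
Qed.

Lemma big_or_elim (Prim : Type) (primSem : Prim -> (nat -> Z) -> Heap -> Prop) (n : nat)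
  eta (rho : nat -> Tup n -> Prop) :
  forall (l : list (assn Prim)) hs, @sem Prim primSem n eta rho (big_or l) hs ->
    exists x, In x l /\ @sem Prim primSem n eta rho x hs.
Proof.
  intro l; induction l as [|a l IH]; intros hs H; simpl in *; [contradiction|].
  destruct l as [|b l].
  - exists a; auto.
  - destruct H as [H|H]; [exists a; auto|].
    destruct (IH hs H) as [x [Hx Hs]]. exists x; auto.
Qed.

Definition cnt (l : list nat) (c : nat) : nat :=
  length (filter (fun x => Nat.eqb (nth x l 0) c) (seq 0 (length l))).

Lemma filter_map_S (P : nat -> bool) s :
  length (filter P (map S s)) = length (filter (fun x => P (S x)) s).
Proof. induction s; simpl; auto. destruct (P (S a)); simpl; auto. Qed.

Lemma count_cnt l c : count_occ Nat.eq_dec l c = cnt l c.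
Proof.
  unfold cnt. induction l as [|a l IH]; simpl; auto.
  rewrite IH, <- seq_shift.
  destruct (Nat.eq_dec a c); destruct (Nat.eqb_spec a c); try congruence; simpl;
  rewrite filter_map_S; reflexivity.
Qed.

Lemma nodup_map_inj (f : nat -> nat) (s : list nat) :
  NoDup s -> (forall x y, In x s -> In y s -> f x = f y -> x = y) -> NoDup (map f s).
Proof.
  induction s as [|a s IH]; intros Hn Hi; simpl; constructor.
  - inversion Hn; subst. intro H. apply in_map_iff in H as [x [Ex Hx]].
    assert (x = a) by (apply Hi; simpl; auto). subst; contradiction.
  - inversion Hn; subst. apply IH; auto. intros; apply Hi; simpl; auto.
Qed.

Lemma count_le (l1 l2 : list nat) (f : nat -> nat) :
  (forall x, x < length l1 -> f x < length l2 /\ nth (f x) l2 0 = nth x l1 0) ->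
  (forall x y, x < length l1 -> y < length l1 -> f x = f y -> x = y) ->
  forall c, count_occ Nat.eq_dec l1 c <= count_occ Nat.eq_dec l2 c.
Proof.
  intros Hf Hinj c. rewrite !count_cnt. unfold cnt.
  rewrite <- (length_map f).
  apply NoDup_incl_length.
  - apply nodup_map_inj. apply NoDup_filter, seq_NoDup.
    intros x y Hx Hy. apply filter_In in Hx as [Hx _], Hy as [Hy _].
    apply in_seq in Hx, Hy. apply Hinj; lia.
  - intros y Hy. apply in_map_iff in Hy as [x [<- Hx]].
    apply filter_In in Hx as [Hx Hc]. apply in_seq in Hx.
    destruct (Hf x ltac:(lia)) as [H1 H2].
    apply filter_In. split; [apply in_seq; lia|]. rewrite H2. exact Hc.
Qed.

Definition enc (K a b c d : nat) : nat := a + K * (b + K * (c + K * d)).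
Definition cell (N : positive) (K a b c d : nat) : positive :=
  Pos.of_succ_nat (Pos.to_nat N + enc K a b c d).

Lemma enc_inj K a b c d a' b' c' d' : a < K -> b < K -> c < K -> a' < K -> b' < K -> c' < K ->
  enc K a b c d = enc K a' b' c' d' -> a = a' /\ b = b' /\ c = c' /\ d = d'.
Proof.
  unfold enc; intros.
  destruct (Nat.div_mod_unique K (b + K * (c + K * d)) (b' + K * (c' + K * d')) a a') as [E1 E2];
    [auto|auto|lia|].
  destruct (Nat.div_mod_unique K (c + K * d) (c' + K * d') b b') as [E3 E4]; [auto|auto|lia|].
  destruct (Nat.div_mod_unique K d d' c c') as [E5 E6]; [auto|auto|lia|].
  auto.
Qed.

Lemma cell_inj N K a b c d a' b' c' d' : a < K -> b < K -> c < K -> a' < K -> b' < K -> c' < K ->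
  cell N K a b c d = cell N K a' b' c' d' -> a = a' /\ b = b' /\ c = c' /\ d = d'.
Proof.
  unfold cell; intros. apply SuccNat2Pos.inj in H5. apply enc_inj with K; auto. lia.
Qed.

Lemma cell_gt N K a b c d : (N < cell N K a b c d)%positive.
Proof. unfold cell. pose proof (SuccNat2Pos.id_succ (Pos.to_nat N + enc K a b c d)). lia. Qed.

Lemma enc_le K a b c d : a < K -> b < K -> c < K -> d < K ->
  enc K a b c d <= K + K * (K + K * (K + K * K)).
Proof.
  unfold enc; intros.
  apply Nat.add_le_mono; [lia|]. apply Nat.mul_le_mono_l.
  apply Nat.add_le_mono; [lia|]. apply Nat.mul_le_mono_l.
  apply Nat.add_le_mono; [lia|]. apply Nat.mul_le_mono_l. lia.
Qed.

Definition Tok (N : positive) (K : nat) (p : positive) : Prop :=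
  exists a b c d, a < K /\ b < K /\ c < K /\ d < K /\ (a = c -> b = d) /\ p = cell N K a b c d.

Definition Owns (N : positive) (K : nat) (i m : nat) (p : positive) : Prop :=
  exists a b c d, a < K /\ b < K /\ c < K /\ d < K /\ (a = c -> b = d) /\ p = cell N K a b c d /\
    ((a = i /\ b = m) \/ (c = i /\ d = m)).

Lemma Owns_Tok N K i m p : Owns N K i m p -> Tok N K p.
Proof. intros (a&b&c&d&H1&H2&H3&H4&H5&H6&_). exists a, b, c, d; repeat split; auto. Qed.

Lemma Tok_gt N K p : Tok N K p -> (N < p)%positive.
Proof. intros (a&b&c&d&_&_&_&_&_&->). apply cell_gt. Qed.

Lemma Owns_uniq N K i m m' p : Owns N K i m p -> Owns N K i m' p -> m = m'.
Proof.
  intros (a&b&c&d&H1&H2&H3&H4&H5&H6&H7) (a'&b'&c'&d'&H1'&H2'&H3'&H4'&H5'&H6'&H7').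
  subst p. apply cell_inj in H6'; auto. destruct H6' as (->&->&->&->).
  destruct H7 as [[]|[]], H7' as [[]|[]]; subst; auto.
  symmetry; auto.
Qed.

Lemma Owns_pair N K i m i' m' : i < K -> m < K -> i' < K -> m' < K ->
  ~ (i = i' /\ m <> m') -> exists p, Owns N K i m p /\ Owns N K i' m' p.
Proof.
  intros. destruct (Nat.eq_dec i i').
  - subst. assert (m = m') by lia. subst.
    exists (cell N K i' m' i' m'). split; exists i', m', i', m'; repeat split; auto.
  - exists (cell N K i m i' m'). split; exists i, m, i', m'; repeat split; auto; try lia.
Qed.

Definition Hbig (h : Heap) (N : positive) (K : nat) : Heap.
Proof.
  refine (exist _ (fun p => if dec (p <= N)%positive then hval h p
                            else if dec (Tok N K p) then Some 0%Z else None) _).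
  exists (Pos.of_succ_nat (Pos.to_nat N + (K + K * (K + K * (K + K * K))))).
  intros p Hp. pose proof (SuccNat2Pos.id_succ (Pos.to_nat N + (K + K * (K + K * (K + K * K))))).
  destruct (dec _) as [Hle|_]; [lia|].
  destruct (dec _) as [HT|_]; auto. exfalso.
  destruct HT as (a&b&c&d&H1&H2&H3&H4&_&->). unfold cell in Hp.
  pose proof (enc_le K a b c d H1 H2 H3 H4).
  pose proof (SuccNat2Pos.id_succ (Pos.to_nat N + enc K a b c d)). lia.
Defined.

Lemma Hbig_le h N K p : (p <= N)%positive -> hval (Hbig h N K) p = hval h p.
Proof. intro H. simpl. destruct (dec _); tauto. Qed.

Lemma Hbig_tok h N K p : Tok N K p -> hval (Hbig h N K) p = Some 0%Z.
Proof.
  intro H. pose proof (Tok_gt _ _ _ H). simpl. destruct (dec _); [lia|].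
  destruct (dec _); tauto.
Qed.

Definition hsP (N : positive) (n : nat) (k : {k : nat | k < n}) (p : positive) : Prop :=
  (p <= N)%positive \/ proj1_sig k = 0.
Definition PT (N : positive) (K : nat) (hi : nat -> Heap) (i m n : nat)
  (k : {k : nat | k < n}) (p : positive) : Prop :=
  ((p <= N)%positive /\ proj1_sig k = m /\ hval (hi i) p = None) \/
  (proj1_sig k = 0 /\ Owns N K i m p).
Definition PF (N : positive) (K : nat) (hi : nat -> Heap) (i Mi n : nat)
  (k : {k : nat | k < n}) (p : positive) : Prop :=
  ((p <= N)%positive /\ ~ (proj1_sig k < Mi /\ hval (hi i) p = None)) \/
  (proj1_sig k = 0 /\ (N < p)%positive /\ ~ exists m, m < Mi /\ Owns N K i m p).

Theorem mainTheorem9 (Prim : Type) (primSem : Prim -> (nat -> Z) -> Heap -> Prop)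
    (eta : nat -> Z) (lhs rhs : list (assn Prim * list nat)) (n : nat) :
  canonical_form lhs rhs ->
  2 <= n ->
  (forall p, In p lhs -> length (snd p) <= n) ->
  valid_n primSem n eta (can_lhs lhs) (can_rhs rhs) ->
  parametricity primSem eta lhs rhs.
Proof.
  intros [HL [Hlv [Hrv Hsub]]] Hn Hlen Hval.
  unfold parametricity; cbv zeta; intros h hi Hhi.
  set (d := (@ATrue Prim, @nil nat)).
  destruct (proj2_sig h) as [N HN].
  set (K := length lhs + n + 1).
  set (Hb := Hbig h N K).
  set (Tm := fun i m (k : {k : nat | k < n}) => restr Hb (PT N K hi i m n k)).
  set (rho := fun c (B : Tup n) => exists i m, i < length lhs /\
          m < length (snd (nth i lhs d)) /\ nth m (snd (nth i lhs d)) 0 = c /\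
          forall k, hext (Tm i m k) (B k)).
  set (hs := fun k : {k : nat | k < n} => restr Hb (hsP N n k)).
  assert (Hhp : forall i p v, i < length lhs -> hval (hi i) p = Some v -> hval h p = Some v).
  { intros i p v Hi H. apply (proj1 (Hhi i Hi)). exact H. }
  assert (HhN : forall p v, hval h p = Some v -> (p <= N)%positive).
  { intros p v H. destruct (classic (p <= N)%positive) as [|Hgt]; auto. assert (Hgt2 : (N < p)%positive) by lia.
    specialize (HN p Hgt2). unfold hval in H. congruence. }
  assert (Hup : forall a, upclosed (rho a)).
  { intros a B B' [i [m [H1 [H2 [H3 H4]]]]] Hext. exists i, m; repeat split; auto.
    intros k p v Hv. apply Hext, H4, Hv. }
  assert (Hlhs : @sem Prim primSem n eta rho (can_lhs lhs) hs).
  { unfold can_lhs. apply big_and_intro. intros x Hx.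
    apply in_map_iff in Hx as [pr [<- Hpr]].
    destruct (In_nth _ _ d Hpr) as [i [Hi <-]].
    apply star_intro with (PF := PF N K hi i (length (snd (nth i lhs d))) n)
                          (PT := fun m => PT N K hi i m n).
    - intros idx Hidx. exists i, idx; repeat split; auto. intros k p v H; exact H.
    - eapply sem_up with (T := fun _ => hi i).
      + apply Hlv. apply nth_In; auto.
      + exact (proj2 (Hhi i Hi)).
      + intros k k' p v H. assert (Hh := Hhp i p v Hi H). assert (Hle := HhN p v Hh).
        rewrite restr_in.
        * unfold Hb; rewrite Hbig_le; auto.
        * left; split; auto. intros [_ E]; congruence.
    - intros idx k p Hidx _ [HF HT]. unfold PF, PT in *.
      destruct HF as [[Hp Hnot]|[Hk [Hp Hno]]], HT as [[Hp' [Hk' Hh']]|[Hk' Ho]].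
      + apply Hnot; split; [lia|auto].
      + pose proof (Tok_gt _ _ _ (Owns_Tok _ _ _ _ _ Ho)). lia.
      + lia.
      + apply Hno; exists idx; auto.
    - intros idx idx' k p Hi1 Hi2 _ H1 H2. unfold PT in *.
      destruct H1 as [[Hp [Hk Hh']]|[Hk Ho]], H2 as [[Hp' [Hk' Hh'']]|[Hk' Ho']].
      + lia.
      + pose proof (Tok_gt _ _ _ (Owns_Tok _ _ _ _ _ Ho')). lia.
      + pose proof (Tok_gt _ _ _ (Owns_Tok _ _ _ _ _ Ho)). lia.
      + eapply Owns_uniq; eauto.
    - intros k p _. unfold hsP, PF, PT. split.
      + intro Hk. destruct (classic (p <= N)%positive) as [Hle|Hgt].
        * destruct (classic (proj1_sig k < length (snd (nth i lhs d)) /\ hval (hi i) p = None))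
            as [[Hk1 Hh1]|Hno].
          -- right; exists (proj1_sig k); split; auto.
          -- left; left; auto.
        * destruct Hk as [Hk|Hk]; [contradiction|].
          destruct (classic (exists m, m < length (snd (nth i lhs d)) /\ Owns N K i m p))
            as [[m [Hm Ho]]|Hno].
          -- right; exists m; split; auto.
          -- left; right; split; auto. split; auto. lia.
      + intros [[[Hle _]|[Hk0 _]]|[idx [_ [[Hle _]|[Hk0 _]]]]]; auto. }
  pose proof (Hval rho Hup hs Hlhs) as Hrhs.
  unfold can_rhs in Hrhs. apply big_or_elim in Hrhs as [x [Hx Hs]].
  apply in_map_iff in Hx as [pr [<- Hpr]].
  destruct (In_nth _ _ d Hpr) as [j [Hj Epr]]. subst pr.
  apply star_elim in Hs as [G [Bs [HG [HGe [HBs HBd]]]]].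
  assert (H0n : 0 < n) by lia. assert (H1n : 1 < n) by lia.
  set (z0 := exist (fun k => k < n) 0 H0n).
  set (k1 := exist (fun k => k < n) 1 H1n).
  assert (Hk1 : forall p v, hval (G k1) p = Some v -> (p <= N)%positive /\ hval h p = Some v).
  { intros p v H. apply HGe in H. unfold hs in H. rewrite restr_val in H.
    destruct (dec _) as [Hp|]; [|discriminate].
    destruct Hp as [Hp|Hp]; [|simpl in Hp; discriminate].
    unfold Hb in H; rewrite Hbig_le in H; auto. }
  destruct (Nat.eq_dec (length (snd (nth j rhs d))) 0) as [Hz|Hnz].
  - right. exists j. split; auto. split; [apply length_zero_iff_nil; auto|].
    eapply (sem_down _ _ _ z0); [apply Hrv; apply nth_In; auto | exact HG |].
    intros p v H. apply (Hk1 p v (H k1)).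
  - left.
    set (bs := snd (nth j rhs d)) in *.
    assert (Hex : forall idx, exists im : nat * nat, idx < length bs ->
      (fst im < length lhs /\ snd im < length (snd (nth (fst im) lhs d)) /\
       nth (snd im) (snd (nth (fst im) lhs d)) 0 = nth idx bs 0 /\
       forall k, hext (Tm (fst im) (snd im) k) (Bs idx k))).
    { intro idx. destruct (classic (idx < length bs)) as [Hi|Hi].
      - destruct (HBs idx Hi) as [[i [m [H1 [H2 [H3 H4]]]]] _]. exists (i, m); simpl; auto.
      - exists (0, 0); intro; contradiction. }
    set (g := fun idx => proj1_sig (constructive_indefinite_description _ (Hex idx))).
    assert (Hg : forall idx, idx < length bs ->
      (fst (g idx) < length lhs /\ snd (g idx) < length (snd (nth (fst (g idx)) lhs d)) /\
       nth (snd (g idx)) (snd (nth (fst (g idx)) lhs d)) 0 = nth idx bs 0 /\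
       forall k, hext (Tm (fst (g idx)) (snd (g idx)) k) (Bs idx k))).
    { intro idx. unfold g. destruct (constructive_indefinite_description _ (Hex idx)); simpl; auto. }
    assert (Hbnd : forall idx, idx < length bs -> fst (g idx) < K /\ snd (g idx) < K).
    { intros idx Hi. destruct (Hg idx Hi) as [H1 [H2 _]].
      pose proof (Hlen _ (nth_In lhs d H1)). unfold K. lia. }
    assert (Hov : forall idx idx', idx < length bs -> idx' < length bs -> idx <> idx' ->
      fst (g idx) = fst (g idx') /\ snd (g idx) <> snd (g idx')).
    { intros idx idx' Hi Hi' Hne. apply NNPP; intro Hc.
      destruct (Hbnd idx Hi), (Hbnd idx' Hi').
      destruct (Owns_pair N K (fst (g idx)) (snd (g idx)) (fst (g idx')) (snd (g idx')))
        as [p [Ho Ho']]; auto.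
      assert (E : forall i m, Owns N K i m p -> hval (Tm i m z0) p = Some 0%Z).
      { intros i m Ho1. unfold Tm. rewrite restr_in.
        - unfold Hb. apply Hbig_tok. eapply Owns_Tok; eauto.
        - right; split; auto. }
      pose proof (proj2 (proj2 (proj2 (Hg idx Hi))) z0 p _ (E _ _ Ho)) as B1.
      pose proof (proj2 (proj2 (proj2 (Hg idx' Hi'))) z0 p _ (E _ _ Ho')) as B2.
      destruct (HBd idx idx' Hi Hi' Hne z0 p); congruence. }
    assert (Hb0 : 0 < length bs) by lia.
    set (i0 := fst (g 0)). set (m0 := snd (g 0)).
    assert (Hfst : forall idx, idx < length bs -> fst (g idx) = i0).
    { intros idx Hi. destruct (Nat.eq_dec idx 0); [subst; reflexivity|].
      symmetry; apply (Hov 0 idx); auto. }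
    destruct (Hg 0 Hb0) as [Hi0 [Hm0' [_ HT0]]]. fold i0 m0 in Hi0, Hm0', HT0.
    assert (Hm0 : m0 < n).
    { pose proof (Hlen _ (nth_In lhs d Hi0)). lia. }
    set (km := exist (fun k => k < n) m0 Hm0).
    exists i0, j. split; auto. split; auto. split.
    + eapply (sem_down _ _ _ z0); [apply Hrv; apply nth_In; auto | exact HG |].
      intros p v H. destruct (Hk1 p v (H k1)) as [Hle Hhv].
      destruct (hval (hi i0) p) eqn:E.
      * pose proof (Hhp i0 p z Hi0 E). congruence.
      * exfalso.
        assert (T1 : hval (Tm i0 m0 km) p = Some v).
        { unfold Tm. rewrite restr_in.
          - unfold Hb; rewrite Hbig_le; auto.
          - left; repeat split; auto. }
        apply HT0 in T1.
        destruct (proj2 (proj2 (HBs 0 Hb0)) km p) as [E1|E1]; congruence.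
    + intros c _. apply count_le with (f := fun idx => snd (g idx)).
      * intros y Hy. destruct (Hg y Hy) as [_ [H2 [H3 _]]]. rewrite Hfst in H2, H3 by auto. auto.
      * intros y y' Hy Hy' Eyy. destruct (Nat.eq_dec y y') as [|Hne]; auto. exfalso.
        destruct (Hov y y' Hy Hy' Hne); contradiction.
Qed.
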